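(* Let $S$ be a solid and let $P=\{x\in S: e(x)=0\}$ be the set of precise elements. Then $P$, with the restrictions of $+$, $\cdot$ and $\le$, is an ordered field with zero $0$ and unit $1$.
   Context: A solid is a set $S$ with two binary operations $+$ and $\cdot$ (written $xy$) and a binary relation $\le$ satisfying the following axioms (all variables range over $S$). (A1) $+$ is associative and commutative. (A2) For each $x$ there is $e$ with $x+e=x$ such that $e+f=e$ for every $f$ with $x+f=x$; this $e$ is unique and is denoted $e(x)$ (the magnitude of $x$). An element $x$ with $x=e(x)$ is called a magnitude. (A3) For each $x$ there is $s$ with $x+s=e(x)$ and $e(s)=e(x)$; it is unique and denoted $-x$; write $x-y$ for $x+(-y)$. (A4) $e(x+y)=e(x)$ or $e(x+y)=e(y)$. (M1) $\cdot$ is associative and commutative. (M2) For each $x\neq e(x)$ there is $u$ with $xu=x$ such that $uv=u$ for every $v$ with $xv=x$; it is unique and denoted $u(x)$. (M3) For each $x\ne e(x)$ there is $d$ with $xd=u(x)$ and $u(d)=u(x)$; it is unique and denoted $x^{-1}$; write $y/x$ for $yx^{-1}$. (M4) If $x\neq e(x)$ and $y\ne e(y)$ then $u(xy)=u(x)$ or $u(xy)=u(y)$. (O1) $\le$ is a total order (reflexive, antisymmetric, transitive, total); $x<y$ means $x\le y$ and $x\ne y$. (O2) $x\le y\Rightarrow x+z\le y+z$. (O3) $y+e(x)=e(x)\Rightarrow (y\le e(x)$ and $-y\le e(x))$. (O4) $(e(x)<x$ and $y\le z)\Rightarrow xy\le xz$. (O5) $e(y)\le y\le z\Rightarrow e(x)y\le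 e(x)z$. (AM1) For all $x,y$ there is $z$ with $e(x)y=e(z)$. (AM2) $e(xy)=e(x)y+e(y)x$. (AM3) If $x\ne e(x)$ then $e(u(x))=e(x)/x$. (AM4) (distributivity axiom) $xy+xz=x(y+z)+e(x)y+e(x)z$. (AM5) $-(xy)=(-x)y$. (E1) There is $m$ with $m+x=x$ for all $x$; it is unique, called zero and denoted $0$. (E2) There is $u$ with $ux=x$ for all $x$; it is unique, called one and denoted $1$. (E3) There is $M$ with $e(x)+M=M$ for all $x$. (E4) There is $x$ with $e(x)\ne 0$ and $e(x)\ne M$. (E5) For every $x$ there is $a$ with $x=a+e(x)$ and $e(a)=0$. (E6) If $x,y$ are magnitudes with $x<y$, there is $z$ with $z\ne e(z)$ and $x<z<y$. Further notation: $S^*=\{x\in S: x\ne e(x)\}$ (zeroless elements). $x$ is positive if $e(x)\le x$ and negative if $x<e(x)$; $|x|=x$ if $x$ is positive and $|x|=-x$ if $x$ is negative. $x$ is precise if $e(x)=0$. The relative uncertainty $R(x)$ is $e(u(x))$ if $x\ne e(x)$, and $M$ (from (E3)) if $x=e(x)$. *)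

(* Defs.v *)
Set Implicit Arguments.

(* The derived operations e, -, u, ^{-1} of axioms (A2),(A3),(M2),(M3)
   are included as functions together with their defining properties (including
   the uniqueness asserted in the axioms).  u and inv are only constrained on
   zeroless elements (x <> e x). *)
Record Solid := {
  carrier :> Type;
  add : carrier -> carrier -> carrier;
  mul : carrier -> carrier -> carrier;
  le  : carrier -> carrier -> Prop;
  e   : carrier -> carrier;
  opp : carrier -> carrier;
  u   : carrier -> carrier;
  inv : carrier -> carrier;
  zero : carrier;
  one : carrier;
  bigM : carrier;
  A1_assoc : forall x y z, add x (add y z) = add (add x y) z;
  A1_comm : forall x y, add x y = add y x;
  A2_neutral : forall x, add x (e x) = x;
  A2_min : forall x f, add x f = x -> add (e x) f = e x;
  A2_unique : forall x e', add x e' = x -> (forall f, add x f = x -> add e' f = e') -> e' = e x;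
  A3_opp : forall x, add x (opp x) = e x /\ e (opp x) = e x;
  A3_unique : forall x s, add x s = e x -> e s = e x -> s = opp x;
  A4 : forall x y, e (add x y) = e x \/ e (add x y) = e y;
  M1_assoc : forall x y z, mul x (mul y z) = mul (mul x y) z;
  M1_comm : forall x y, mul x y = mul y x;
  M2_neutral : forall x, x <> e x -> mul x (u x) = x;
  M2_min : forall x v, x <> e x -> mul x v = x -> mul (u x) v = u x;
  M2_unique : forall x u', x <> e x -> mul x u' = x ->
      (forall v, mul x v = x -> mul u' v = u') -> u' = u x;
  M3_inv : forall x, x <> e x -> mul x (inv x) = u x /\ u (inv x) = u x;
  M3_unique : forall x d, x <> e x -> mul x d = u x -> u d = u x -> d = inv x;
  M4 : forall x y, x <> e x -> y <> e y -> u (mul x y) = u x \/ u (mul x y) = u y;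
  O1_refl : forall x, le x x;
  O1_antisym : forall x y, le x y -> le y x -> x = y;
  O1_trans : forall x y z, le x y -> le y z -> le x z;
  O1_total : forall x y, le x y \/ le y x;
  O2 : forall x y z, le x y -> le (add x z) (add y z);
  O3 : forall x y, add y (e x) = e x -> le y (e x) /\ le (opp y) (e x);
  O4 : forall x y z, (le (e x) x /\ e x <> x) -> le y z -> le (mul x y) (mul x z);
  O5 : forall x y z, le (e y) y -> le y z -> le (mul (e x) y) (mul (e x) z);
  AM1 : forall x y, exists z, mul (e x) y = e z;
  AM2 : forall x y, e (mul x y) = add (mul (e x) y) (mul (e y) x);
  AM3 : forall x, x <> e x -> e (u x) = mul (e x) (inv x);
  AM4 : forall x y z, add (mul x y) (mul x z)
        = add (add (mul x (add y z)) (mul (e x) y)) (mul (e x) z);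
  AM5 : forall x y, opp (mul x y) = mul (opp x) y;
  E1 : forall x, add zero x = x;
  E2 : forall x, mul one x = x;
  E3 : forall x, add (e x) bigM = bigM;
  E4 : exists x, e x <> zero /\ e x <> bigM;
  E5 : forall x, exists a, x = add a (e x) /\ e a = zero;
  E6 : forall x y, x = e x -> y = e y -> (le x y /\ x <> y) ->
        exists z, z <> e z /\ (le x z /\ x <> z) /\ (le z y /\ z <> y)
}.

Definition is_ordered_field {T : Type} (P : T -> Prop)
  (add mul : T -> T -> T) (le : T -> T -> Prop) (z o : T) : Prop :=
  P z /\ P o /\
  (forall x y, P x -> P y -> P (add x y)) /\
  (forall x y, P x -> P y -> P (mul x y)) /\
  (forall x y w, P x -> P y -> P w -> add x (add y w) = add (add x y) w) /\
  (forall x y, P x -> P y -> add x y = add y x) /\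
  (forall x, P x -> add z x = x) /\
  (forall x, P x -> exists y, P y /\ add x y = z) /\
  (forall x y w, P x -> P y -> P w -> mul x (mul y w) = mul (mul x y) w) /\
  (forall x y, P x -> P y -> mul x y = mul y x) /\
  (forall x, P x -> mul o x = x) /\
  (forall x, P x -> x <> z -> exists y, P y /\ mul x y = o) /\
  (forall x y w, P x -> P y -> P w -> mul x (add y w) = add (mul x y) (mul x w)) /\
  z <> o /\
  (forall x, P x -> le x x) /\
  (forall x y, P x -> P y -> le x y -> le y x -> x = y) /\
  (forall x y w, P x -> P y -> P w -> le x y -> le y w -> le x w) /\
  (forall x y, P x -> P y -> le x y \/ le y x) /\
  (forall x y w, P x -> P y -> P w -> le x y -> le (add x w) (add y w)) /\
  (forall x y, P x -> P y -> le z x -> le z y -> le z (mul x y)).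

Definition precise (S : Solid) (x : S) : Prop := e S x = zero S.

(* Main.v *)
Require Import Defs.
From Stdlib Require Import Classical.

Lemma L_emm (S : Solid) (x : S) : add S (e S x) (e S x) = e S x.
Proof. apply A2_min. apply A2_neutral. Qed.

Lemma L_ee (S : Solid) (x : S) : e S (e S x) = e S x.
Proof. symmetry. apply A2_unique; [apply L_emm | auto]. Qed.

Lemma L_e0 (S : Solid) : e S (zero S) = zero S.
Proof. rewrite <- (E1 S (e S (zero S))). apply A2_neutral. Qed.

Lemma L_0le_e (S : Solid) (x : S) : le S (zero S) (e S x).
Proof. apply (O3 S x (zero S)). apply E1. Qed.

Lemma L_mag_of (S : Solid) (x y : S) : e S (mul S (e S x) y) = mul S (e S x) y.
Proof. destruct (AM1 S x y) as [z Hz]. rewrite Hz. apply L_ee. Qed.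

Lemma L_opp_e (S : Solid) (x : S) : opp S (e S x) = e S x.
Proof. symmetry. apply A3_unique; [rewrite L_ee; apply L_emm | reflexivity]. Qed.

Lemma L_oppopp (S : Solid) (x : S) : opp S (opp S x) = x.
Proof.
  destruct (A3_opp S x) as [H1 H2].
  symmetry. apply A3_unique.
  - rewrite A1_comm, H1, H2. reflexivity.
  - symmetry; exact H2.
Qed.

Lemma L_add0 (S : Solid) (x : S) : add S x (zero S) = x.
Proof. rewrite A1_comm. apply E1. Qed.

Lemma L_mul1 (S : Solid) (x : S) : mul S x (one S) = x.
Proof. rewrite M1_comm. apply E2. Qed.

Lemma L_precise_cancel (S : Solid) (y f : S) :
  e S y = zero S -> add S y f = y -> f = zero S.
Proof. intros Hy H. pose proof (A2_min S f H) as H'. rewrite Hy, E1 in H'. exact H'. Qed.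

Lemma L_mag_sum0 (S : Solid) (m n : S) :
  e S m = m -> e S n = n -> add S m n = zero S -> m = zero S.
Proof.
  intros Hm Hn H.
  apply O1_antisym.
  - pose proof (O2 S (zero S) n m) as H2.
    rewrite E1, A1_comm, H in H2. apply H2. rewrite <- Hn. apply L_0le_e.
  - rewrite <- Hm. apply L_0le_e.
Qed.

Lemma L_one_not_mag (S : Solid) : one S <> e S (one S).
Proof.
  intro H1.
  assert (Hall : forall x : S, e S x = x).
  { intro x. pose proof (AM2 S (one S) x) as H. rewrite E2, <- H1, E2 in H.
    rewrite L_mul1 in H. rewrite H. apply A2_neutral. }
  destruct (E4 S) as [x0 [Hx0 _]].
  destruct (E6 S (x:=zero S) (y:=e S x0)) as [z [Hz _]].
  - rewrite L_e0; reflexivity.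
  - rewrite L_ee; reflexivity.
  - split. apply L_0le_e. intro Heq. apply Hx0. symmetry. exact Heq.
  - apply Hz. symmetry. apply Hall.
Qed.

Lemma L_xe1 (S : Solid) (x : S) : e S x = zero S -> mul S (e S (one S)) x = zero S.
Proof.
  intro Hx. pose proof (AM2 S (one S) x) as H. rewrite E2, Hx, L_mul1, L_add0 in H.
  symmetry; exact H.
Qed.

Lemma L_e1_aux (S : Solid) (c w : S) :
  e S c = zero S -> le S (zero S) c -> w = add S c (e S (one S)) ->
  e S w = e S (one S) -> w <> e S w -> mul S (e S (one S)) w = e S (one S) ->
  e S (one S) = zero S.
Proof.
  intros Hc Hc0 Hw Hew Hne Hmw.
  set (m := e S (one S)) in *.
  assert (Hmm : add S m m = m) by apply L_emm.
  assert (Hmw' : le S m w).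
  { rewrite Hw. pose proof (O2 S (zero S) c m Hc0) as H. rewrite E1 in H. exact H. }
  assert (Hmc : le S m c).
  { destruct (O1_total S m c) as [H|H]; [exact H|].
    exfalso. apply Hne. rewrite Hew.
    apply O1_antisym; [| exact Hmw'].
    pose proof (O2 S c m m H) as H2. rewrite <- Hw, Hmm in H2. exact H2. }
  assert (Hwcc : le S w (add S c c)).
  { rewrite Hw, (A1_comm S c m). apply O2. exact Hmc. }
  pose proof (O5 S (one S) w (add S c c)) as H5.
  fold m in H5. rewrite Hmw in H5.
  rewrite L_xe1 in H5.
  - apply O1_antisym.
    + apply H5; [rewrite Hew; exact Hmw' | exact Hwcc].
    + apply L_0le_e.
  - destruct (A4 S c c) as [H|H]; rewrite H; exact Hc.
Qed.

Lemma L_e1 (S : Solid) : e S (one S) = zero S.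
Proof.
  destruct (E5 S (one S)) as [b [Hb Heb]].
  set (m := e S (one S)) in *.
  destruct (O1_total S (zero S) b) as [H0b|Hb0].
  - apply (L_e1_aux S b (one S)); auto.
    + apply L_one_not_mag.
    + unfold m. rewrite M1_comm. apply E2.
  - destruct (A3_opp S b) as [Hbo Hebo].
    assert (Hob : e S (opp S b) = zero S) by (rewrite Hebo; exact Heb).
    destruct (A4 S (opp S b) m) as [H|H].
    + apply (L_precise_cancel S (add S (opp S b) m)).
      * rewrite H; exact Hob.
      * rewrite <- A1_assoc. unfold m. rewrite L_emm. reflexivity.
    + assert (Hopp1 : opp S (one S) = add S (opp S b) m).
      { symmetry. apply A3_unique.
        - rewrite Hb at 1. fold m.
          rewrite <- A1_assoc, (A1_assoc S m (opp S b) m), (A1_comm S m (opp S b)),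
            <- (A1_assoc S (opp S b) m m).
          unfold m; rewrite L_emm. fold m.
          rewrite A1_assoc, Hbo, Heb, E1. reflexivity.
        - rewrite H. unfold m. apply L_ee. }
      destruct (A3_opp S (one S)) as [_ He1].
      apply (L_e1_aux S (opp S b) (opp S (one S))); auto.
      * pose proof (O2 S b (zero S) (opp S b) Hb0) as H2. rewrite Hbo, Heb, E1 in H2. exact H2.
      * intro Hc. apply (L_one_not_mag S).
        rewrite He1 in Hc. transitivity (opp S (opp S (one S))); [symmetry; apply L_oppopp|].
        rewrite Hc. apply L_opp_e.
      * unfold m. rewrite M1_comm, <- AM5, E2. apply L_opp_e.
Qed.

Lemma L_0y (S : Solid) (y : S) : e S y = zero S -> mul S (zero S) y = zero S.
Proof. intro H. pose proof (L_xe1 S y H) as H1. rewrite L_e1 in H1. exact H1. Qed.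

Lemma L_y0 (S : Solid) (y : S) : e S y = zero S -> mul S y (zero S) = zero S.
Proof. intro H. rewrite M1_comm. apply L_0y; exact H. Qed.

Lemma L_mul_closed (S : Solid) (x y : S) :
  e S x = zero S -> e S y = zero S -> e S (mul S x y) = zero S.
Proof. intros Hx Hy. rewrite AM2, Hx, Hy, !L_0y; auto. apply E1. Qed.

Lemma L_add_closed (S : Solid) (x y : S) :
  e S x = zero S -> e S y = zero S -> e S (add S x y) = zero S.
Proof. intros Hx Hy. destruct (A4 S x y) as [H|H]; rewrite H; auto. Qed.

Lemma L_distr (S : Solid) (x y z : S) :
  e S x = zero S -> e S y = zero S -> e S z = zero S ->
  mul S x (add S y z) = add S (mul S x y) (mul S x z).
Proof.
  intros Hx Hy Hz. rewrite AM4, Hx, !L_0y, !L_add0; auto.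
Qed.

Lemma L_opp0 (S : Solid) : opp S (zero S) = zero S.
Proof. rewrite <- (L_e0 S) at 1. rewrite L_opp_e. apply L_e0. Qed.

Lemma L_nonneg_mul (S : Solid) (x y : S) :
  e S x = zero S -> e S y = zero S -> le S (zero S) x -> le S (zero S) y ->
  le S (zero S) (mul S x y).
Proof.
  intros Hx Hy H0x H0y.
  destruct (classic (x = zero S)) as [Hx0|Hx0].
  - rewrite Hx0, L_0y; auto. apply O1_refl.
  - rewrite <- (L_y0 S x Hx) at 1. apply O4; auto.
    rewrite Hx. split; auto.
Qed.

Lemma L_sq_nonneg (S : Solid) (a : S) :
  e S a = zero S -> le S (zero S) (mul S a a).
Proof.
  intro Ha.
  destruct (A3_opp S a) as [Hao Heao].
  destruct (O1_total S (zero S) a) as [H|H].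
  - apply L_nonneg_mul; auto.
  - assert (Hoa : e S (opp S a) = zero S) by (rewrite Heao; exact Ha).
    assert (Heq : mul S (opp S a) (opp S a) = mul S a a).
    { rewrite <- AM5, M1_comm, <- AM5, L_oppopp. reflexivity. }
    assert (H3 : le S (zero S) (opp S a)).
    { pose proof (O2 S a (zero S) (opp S a) H) as H2. rewrite Hao, Ha, E1 in H2. exact H2. }
    rewrite <- Heq. apply L_nonneg_mul; auto.
Qed.

Lemma L_idem (S : Solid) (p : S) :
  e S p = zero S -> mul S p p = p -> p <> zero S -> p = one S.
Proof.
  intros Hp Hpp Hp0.
  destruct (A3_opp S p) as [Hpo Hepo].
  assert (Hop : e S (opp S p) = zero S) by (rewrite Hepo; exact Hp).
  set (f := add S (one S) (opp S p)).
  assert (Hf : e S f = zero S) by (apply L_add_closed; auto; apply L_e1).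
  assert (Hpf : mul S p f = zero S).
  { unfold f. rewrite L_distr; auto; [|apply L_e1].
    rewrite L_mul1, M1_comm, <- AM5, Hpp, Hpo, Hp. reflexivity. }
  assert (Hff : mul S f f = f).
  { unfold f at 2. rewrite L_distr; auto; [|apply L_e1].
    rewrite L_mul1, M1_comm, <- AM5, Hpf, L_opp0, L_add0. reflexivity. }
  assert (H0p : le S (zero S) p) by (rewrite <- Hpp; apply L_sq_nonneg; auto).
  assert (H0f : le S (zero S) f) by (rewrite <- Hff; apply L_sq_nonneg; auto).
  destruct (O1_total S p f) as [H|H].
  - exfalso. apply Hp0. apply O1_antisym; auto.
    pose proof (O4 S (x:=p) p f) as H4. rewrite Hpp, Hpf in H4. apply H4; auto.
    rewrite Hp. split; auto.
  - destruct (classic (f = zero S)) as [Hf0|Hf0].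
    + unfold f in Hf0.
      assert (H1 : add S (add S (one S) (opp S p)) p = p) by (rewrite Hf0; apply E1).
      rewrite <- A1_assoc, (A1_comm S (opp S p) p), Hpo, Hp, L_add0 in H1.
      symmetry; exact H1.
    + exfalso. apply Hf0. apply O1_antisym; auto.
      pose proof (O4 S (x:=f) f p) as H4. rewrite Hff, M1_comm, Hpf in H4. apply H4; auto.
      rewrite Hf. split; auto.
Qed.

Lemma L_inverse (S : Solid) (x : S) :
  e S x = zero S -> x <> zero S -> exists y, e S y = zero S /\ mul S x y = one S.
Proof.
  intros Hx Hx0.
  assert (Hxz : x <> e S x) by (rewrite Hx; exact Hx0).
  set (p := u S x). set (d := inv S x).
  assert (HA : mul S x p = x) by (apply M2_neutral; exact Hxz).
  destruct (M3_inv S Hxz) as [HB HBu]. fold d p in HB, HBu.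
  assert (HC : mul S p p = p) by (apply M2_min; auto).
  assert (HE : mul S (zero S) d = zero S).
  { assert (HD : mul S (e S x) p = zero S).
    { apply (L_mag_sum0 S _ (mul S (e S p) x)); try apply L_mag_of.
      rewrite <- AM2, HA. exact Hx. }
    rewrite Hx in HD.
    replace (mul S (zero S) d) with (mul S (mul S (zero S) x) d) by (rewrite L_0y; auto).
    rewrite <- M1_assoc, HB. exact HD. }
  assert (HF : e S p = zero S).
  { unfold p. rewrite AM3 by exact Hxz. fold d. rewrite Hx. exact HE. }
  assert (HG : mul S (e S d) x = zero S).
  {
    apply (L_mag_sum0 S _ (mul S (e S x) d)); try apply L_mag_of.
    rewrite A1_comm, <- AM2, HB. exact HF. }
  assert (HH : d <> e S d).
  { intro Hd. apply Hx0. rewrite <- HA.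
    assert (Hp0 : p = zero S).
    { rewrite <- HB, Hd, M1_comm. exact HG. }
    rewrite Hp0. apply L_y0; exact Hx. }
  assert (HI : mul S d p = d) by (rewrite <- HBu; apply M2_neutral; exact HH).
  assert (HJ : e S d = zero S).
  { rewrite <- HI at 1. rewrite AM2, HF, HE, L_add0.
    rewrite <- HB, M1_assoc, HG. exact HE. }
  assert (HK : p = one S).
  { apply L_idem; auto. intro Hp0. apply Hx0. rewrite <- HA, Hp0. apply L_y0; exact Hx. }
  exists d. split; auto. rewrite HB. exact HK.
Qed.

Theorem mainTheorem16 (S : Solid) :
  is_ordered_field (@precise S) (add S) (mul S) (le S) (zero S) (one S).
Proof.
  unfold is_ordered_field, precise.
  pose proof (L_e1 S) as He1.
  repeat split.
  - apply L_e0.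
  - exact He1.
  - intros; apply L_add_closed; auto.
  - intros; apply L_mul_closed; auto.
  - intros; apply A1_assoc.
  - intros; apply A1_comm.
  - intros; apply E1.
  - intros x Hx. exists (opp S x). destruct (A3_opp S x) as [H1 H2].
    rewrite H2, H1. auto.
  - intros; apply M1_assoc.
  - intros; apply M1_comm.
  - intros; apply E2.
  - intros x Hx Hx0. apply L_inverse; auto.
  - intros; apply L_distr; auto.
  - intro H. apply (L_one_not_mag S). rewrite He1. symmetry. exact H.
  - intros; apply O1_refl.
  - intros; apply O1_antisym; auto.
  - intros x y w _ _ _; apply O1_trans.
  - intros; apply O1_total.
  - intros; apply O2; auto.
  - intros; apply L_nonneg_mul; auto.
Qed.
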